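(* Let $m\ge1$ be an integer, $q$ a prime power, and consider ${\rm PG}(4m-3,q^2)$ equipped with the non-degenerate Hermitian polar space $\mathcal H(4m-3,q^2)$ obtained by field reduction as follows: take a non-degenerate Hermitian form $h$ on $V(2,q^{4m-2})$ (with respect to $x\mapsto x^{q^{2m-1}}$), regard $V(2,q^{4m-2})$ as a $(4m-2)$-dimensional vector space $\bar V$ over ${\rm GF}(q^2)$, and let $\mathcal H(4m-3,q^2)$ be defined by the form $\bar h={\rm Tr}_{q^{4m-2}|q^2}\circ h$, with associated unitary polarity $\rho$. Then there exists a $(2m-2)$-spread $\mathbf S$ of ${\rm PG}(4m-3,q^2)$ such that $q^{2m-1}+1$ members of $\mathbf S$ are generators of $\mathcal H(4m-3,q^2)$ and the remaining $q^{4m-2}-q^{2m-1}$ members occur in $(q^{4m-2}-q^{2m-1})/2$ pairs of the form $\{\Delta,\Delta^{\rho}\}$ with $\Delta\cap\Delta^{\rho}=\emptyset$.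
   Context: ${\rm Tr}_{q^{4m-2}|q^2}(x)=\sum_{i=0}^{2m-2}x^{q^{2i}}$. A $(2m-2)$-spread of ${\rm PG}(4m-3,q^2)$ is a set of pairwise disjoint $(2m-2)$-dimensional projective subspaces partitioning the point set. Generators of $\mathcal H(4m-3,q^2)$ are its totally isotropic subspaces of projective dimension $2m-2$. *)

(* Defs.v *)
From HB Require Import structures.
From mathcomp Require Import all_boot all_order all_algebra all_field.
Set Implicit Arguments. Unset Strict Implicit. Unset Printing Implicit Defensive.
Import GRing.Theory.
Local Open Scope ring_scope.

Definition lscale (L : fieldType) (a : L) (u : L * L) : L * L :=
  (a * u.1, a * u.2).

Definition is_herm_form (L : fieldType) (sigma : L -> L)
    (h : L * L -> L * L -> L) : Prop :=
  [/\ forall u v w, h (u + v) w = h u w + h v w,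
      forall a u v, h (lscale a u) v = a * h u v &
      forall u v, h v u = sigma (h u v)].

Definition nondegen_form (L : fieldType) (h : L * L -> L * L -> L) : Prop :=
  forall u, (forall v, h u v = 0) -> u = 0.

Definition hconj (L : fieldType) (q m : nat) (x : L) : L := x ^+ (q ^ (2 * m - 1)).

Definition trq2 (L : fieldType) (q m : nat) (x : L) : L :=
  \sum_(i < 2 * m - 1) x ^+ (q ^ (2 * i)).

Definition hbar (L : fieldType) (q m : nat) (h : L * L -> L * L -> L)
    (u v : L * L) : L := trq2 q m (h u v).

(* GF(q^2)-subspaces of Vbar = L * L, L viewed as a vector space over K. *)
Definition totally_isotropic (K : fieldType) (L : fieldExtType K)
    (f : L * L -> L * L -> L) (D : {vspace (L * L)%type}) : Prop :=
  forall u v, u \in D -> v \in D -> f u v = 0.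

Definition is_polar_of (K : fieldType) (L : fieldExtType K)
    (f : L * L -> L * L -> L) (D E : {vspace (L * L)%type}) : Prop :=
  forall v, v \in E <-> (forall u, u \in D -> f u v = 0).

(* A spread by subspaces of vector dimension d (projective dim d-1):
   pairwise trivially intersecting, covering every vector. *)
Definition is_spread (K : fieldType) (L : fieldExtType K) (d : nat)
    (S : seq {vspace (L * L)%type}) : Prop :=
  [/\ uniq S,
      forall D, D \in S -> \dim D = d,
      forall D E, D \in S -> E \in S -> D != E -> (D :&: E)%VS = 0%VS &
      forall v : L * L, exists2 D, D \in S & v \in D].

Definition prime_power (q : nat) : Prop :=
  exists p k, [/\ prime p, (0 < k)%N & q = (p ^ k)%N].

(* Main.v *)
Require Import Defs.
From HB Require Import structures.
From mathcomp Require Import all_boot all_order all_algebra all_field.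
From mathcomp Require Import zify ring.
Import GRing.Theory.
Local Open Scope ring_scope.

Section FF.
Variable F : finFieldType.

Lemma exists_nonroot (p : {poly F}) : p != 0 -> (size p <= #|F|)%N ->
  exists x, ~~ root p x.
Proof.
move=> p0 sp; apply/existsP; rewrite -negb_forall; apply/negP=> /forallP Hall.
have := max_poly_roots p0 (_ : all (root p) (enum F)) (enum_uniq F).
rewrite -cardE => /(_ _) H.
suff : (#|F| < size p)%N by rewrite ltnNge sp.
by apply: H; apply/allP=> x _; apply: Hall.
Qed.

Lemma card_roots (p : {poly F}) : p != 0 -> (#|[pred x | root p x]| < size p)%N.
Proof.
move=> p0; rewrite cardE; apply: max_poly_roots => //; last exact: enum_uniq.
by apply/allP=> x; rewrite mem_enum.
Qed.

Lemma norm_fiber (Q : nat) (c : F) : (1 < Q)%N -> #|F| = (Q ^ 2)%N ->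
  c != 0 -> c ^+ Q = c -> #|[pred y : F | y ^+ Q.+1 == c]| = Q.+1.
Proof.
move=> Q1 cF c0 cQ.
pose f (j : F) := #|[pred y : F | y ^+ Q.+1 == j]|.
have fle j : (f j <= Q.+1)%N.
  have p0 : ('X^(Q.+1) - j%:P : {poly F}) != 0.
    by rewrite -size_poly_eq0 size_polyDl ?size_polyXn // size_polyN size_polyC; case: (j != 0).
  have := card_roots _ p0; rewrite size_polyDl ?size_polyXn; last first.
    by rewrite size_polyN size_polyC; case: (j != 0).
  rewrite ltnS /f => H; apply: leq_trans H; apply: subset_leq_card.
  by apply/subsetP=> y; rewrite !inE rootE !hornerE subr_eq0.
pose Fs := [pred x : F | (x != 0) && (x ^+ Q == x)].
have Fsle : (#|Fs| <= Q.-1)%N.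
  have p0 : ('X^Q - 'X : {poly F}) != 0.
    by rewrite -size_poly_eq0 size_polyDl ?size_polyXn // size_polyN size_polyX.
  have := card_roots _ p0; rewrite size_polyDl ?size_polyXn; last first.
    by rewrite size_polyN size_polyX.
  have E : [pred x | root ('X^Q - 'X) x] =i [predU1 0 & Fs].
    move=> x; rewrite !inE /= rootE !hornerE subr_eq0.
    have [->|xn0] := eqVneq x 0; last by [].
    by rewrite expf_eq0 eqxx andbT; case: (Q) Q1.
  rewrite (eq_card E) cardU1 !inE eqxx /= add1n ltnS => H; rewrite -ltnS prednK //; lia.
have Lst : #|[pred y : F | y != 0]| = \sum_(j in Fs) f j.
  rewrite -sum1_card (partition_big (fun y => y ^+ Q.+1) (mem Fs)) /=; last first.
    move=> y y0; rewrite !inE expf_neq0 //=.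
    by rewrite -exprM mulSn exprD mulnn -cF expf_card exprSr.
  apply: eq_bigr => j Hj; rewrite sum1_card /f; apply: eq_card => y; rewrite !inE.
  rewrite unfold_in /= !inE.
  have [->|//] := eqVneq y 0; rewrite expr0n /=.
  by apply/esym/negbTE; move: Hj; rewrite !inE eq_sym; case/andP.
have cardst : #|[pred y : F | y != 0]| = (Q ^ 2).-1.
  by rewrite -cF -(cardC1 0); apply: eq_card => y; rewrite !inE.
have cFs : c \in Fs by rewrite !inE c0 cQ eqxx.
move: Lst; rewrite cardst (bigD1 c) //=.
have : (\sum_(i in Fs | i != c) f i <= \sum_(i in Fs | i != c) Q.+1)%N by apply: leq_sum => i _; apply: fle.
rewrite sum_nat_const.
have H2 : #|Fs| = (#|[predD1 Fs & c]|).+1 by rewrite (cardD1 c) cFs.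
have := fle c; rewrite -/(f c).
have -> : #|(fun i : F => (i \in Fs) && (i != c))| = #|[predD1 Fs & c]|.
  by apply: eq_card => y; rewrite !inE andbC.
move=> H1 H3 H4.
rewrite H2 in Fsle.
have H5 : (#|[predD1 Fs & c]| * Q.+1 <= (Q - 2) * Q.+1)%N.
  by apply: leq_mul => //; lia.
have H6 : (Q ^ 2 = Q * Q)%N by rewrite expnS expn1.
rewrite H6 in H4.
have H7 : ((Q - 2) * Q.+1 + Q.+1 = Q * Q - 1)%N.
  have [k eQ] : {k | Q = k.+2} by exists (Q - 2)%N; lia.
  rewrite eQ subSS subSS subn0; nia.
move: H1 H3 H4 H5; clearbody f; move: (f c) (\sum_(i in Fs | i != c) f i) (#|[predD1 Fs & c]|) => a b d.
lia.
Qed.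
End FF.

Section Pairs.
Variables (K : finFieldType) (L : fieldExtType K).
Implicit Types (u v p r : L * L) (a b x y : L).

Lemma addpE (x y x' y' : L) : (x, y) + (x', y') = (x + x', y + y').
Proof. by []. Qed.
Lemma zeropE : (0 : L * L) = (0, 0).
Proof. by []. Qed.
Lemma lscaleE a (x y : L) : lscale a (x, y) = (a * x, a * y).
Proof. by []. Qed.

Lemma lscale0 u : lscale 0 u = 0.
Proof. by case: u => x y; rewrite lscaleE !mul0r. Qed.
Lemma lscale1 u : lscale 1 u = u.
Proof. by case: u => x y; rewrite lscaleE !mul1r. Qed.
Lemma lscalex0 a : lscale a 0 = 0.
Proof. by rewrite zeropE lscaleE mulr0. Qed.
Lemma lscaleA a b u : lscale a (lscale b u) = lscale (a * b) u.
Proof. by case: u => x y; rewrite !lscaleE !mulrA. Qed.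
Lemma lscale_eq0 a u : lscale a u = 0 -> a = 0 \/ u = 0.
Proof.
case: u => x y; rewrite lscaleE zeropE => [[]] /eqP; rewrite mulf_eq0 => /orP[/eqP->|/eqP->]; first by left.
by move/eqP; rewrite mulf_eq0 => /orP[/eqP->|/eqP->]; [left|right].
Qed.
Lemma decompe v : v = lscale v.1 (1, 0) + lscale v.2 (0, 1).
Proof. by case: v => x y; rewrite /= !lscaleE addpE; congr pair; ring. Qed.

Definition indep p r := forall x y, lscale x p + lscale y r = 0 -> x = 0 /\ y = 0.

Lemma span2 p r : indep p r -> forall v, exists x y, v = lscale x p + lscale y r.
Proof.
case: p => p1 p2; case: r => r1 r2 Hi [v1 v2].
have [d0|dn0] := eqVneq (p1 * r2 - p2 * r1) 0.
  have H1 : lscale r2 (p1, p2) + lscale (- p2) (r1, r2) = 0.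
    rewrite !lscaleE addpE zeropE; congr pair; last ring.
    by transitivity (p1 * r2 - p2 * r1); [ring | exact d0].
  have H2 : lscale r1 (p1, p2) + lscale (- p1) (r1, r2) = 0.
    rewrite !lscaleE addpE zeropE; congr pair; first ring.
    by transitivity (- (p1 * r2 - p2 * r1)); [ring | rewrite d0 oppr0].
  have [Ha /eqP Hb] := Hi _ _ H1; have [Hc /eqP Hd] := Hi _ _ H2.
  move: Hb Hd; rewrite !oppr_eq0 => /eqP Hb /eqP Hd.
  have H3 : lscale 1 (p1, p2) + lscale 0 (r1, r2) = 0.
    by rewrite Hb Hd lscale1 lscale0 addr0.
  by have [/eqP] := Hi _ _ H3; rewrite oner_eq0.
exists ((v1 * r2 - v2 * r1) / (p1 * r2 - p2 * r1)).
exists ((p1 * v2 - p2 * v1) / (p1 * r2 - p2 * r1)).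
rewrite !lscaleE addpE; congr pair; field; exact: dn0.
Qed.

Section Herm.
Variables (Q : nat) (h : L * L -> L * L -> L).
Hypothesis hD : forall u v w, h (u + v) w = h u w + h v w.
Hypothesis hZ : forall a u v, h (lscale a u) v = a * h u v.
Hypothesis hH : forall u v, h v u = (h u v) ^+ Q.
Hypothesis hN : nondegen_form h.
Hypothesis Q1 : (1 < Q)%N.

Lemma h0l v : h 0 v = 0.
Proof.
have E := hD 0 0 v; rewrite addr0 in E.
by have := congr1 (fun z => z - h 0 v) E; rewrite /= addrK subrr => ->.
Qed.
Lemma hsum x p y r z : h (lscale x p + lscale y r) z = x * h p z + y * h r z.
Proof. by rewrite hD !hZ. Qed.
Lemma hQQ u v : (h u v) ^+ Q ^+ Q = h u v.
Proof. by rewrite -hH -hH. Qed.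
Lemma hZr u a v : h u (lscale a v) = a ^+ Q * h u v.
Proof. by rewrite [LHS]hH hZ exprMn -hH. Qed.
Lemma eQ0 x : (x ^+ Q == 0) = (x == 0).
Proof. by rewrite expf_eq0; case: (Q) Q1. Qed.
Lemma exprQ0 : (0 : L) ^+ Q = 0.
Proof. by apply/eqP; rewrite eQ0. Qed.
Lemma hsym0 u v : h u v = 0 -> h v u = 0.
Proof. by move=> E; rewrite hH E exprQ0. Qed.
Lemma lscale_nz a u : a != 0 -> lscale a u = 0 -> u = 0.
Proof. by move=> a0 /lscale_eq0 [a0'|//]; rewrite a0' eqxx in a0. Qed.

Lemma all_orth p : (forall v, h v p = 0) -> p = 0.
Proof. by move=> H; apply: hN => v; apply: hsym0. Qed.

Lemma perp2 p : h p p != 0 -> exists r, [/\ r != 0, h r p = 0, h r r != 0 & indep p r].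
Proof.
move=> hp.
pose r := lscale (h (0, 1) p) (1, 0) + lscale (- h (1, 0) p) (0, 1).
have hrp : h r p = 0 by rewrite hsum; ring.
have rn0 : r != 0.
  apply/eqP => r0.
  have : r = (h (0, 1) p, - h (1, 0) p) by rewrite /r !lscaleE addpE; congr pair; ring.
  rewrite r0 zeropE => -[/esym H1 /esym /eqP]; rewrite oppr_eq0 => /eqP H2.
  have p0 : p = 0.
    by apply: all_orth => v; rewrite [v]decompe hsum H1 H2; ring.
  by move: hp; rewrite p0 h0l eqxx.
have ind : indep p r.
  move=> x y E.
  have := h0l p; rewrite -{1}E hsum hrp mulr0 addr0 => /eqP; rewrite mulf_eq0 (negbTE hp) orbF => /eqP x0.
  split => //; move: E; rewrite x0 lscale0 add0r => /lscale_eq0 [//|r0].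
  by rewrite r0 eqxx in rn0.
exists r; split => //; apply/eqP => hrr.
have : r = 0.
  apply: all_orth => v; have [x [y ->]] := span2 _ _ ind v.
  by rewrite hsum hrr (hsym0 _ _ hrp); ring.
by move/eqP; rewrite (negbTE rn0).
Qed.

Lemma exists_aniso : (exists t : L, t ^+ Q + t != 0) -> exists u, h u u != 0.
Proof.
move=> [t ht].
have [H1|H1] := eqVneq (h (1, 0) (1, 0)) 0; last by exists (1, 0).
have [H2|H2] := eqVneq (h (0, 1) (0, 1)) 0; last by exists (0, 1).
pose b := h (1, 0) (0, 1).
have hb21 : h (0, 1) (1, 0) = b ^+ Q by rewrite hH.
have bn0 : b != 0.
  apply/eqP => b0.
  have : ((1, 0) : L * L) = 0.
    apply: hN => v; apply: hsym0; rewrite [v]decompe hsum H1 hb21 b0 exprQ0; ring.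
  by rewrite zeropE => -[/eqP]; rewrite oner_eq0.
exists (lscale 1 (1, 0) + lscale (b * t) (0, 1)).
rewrite hsum [h (1, 0) _]hH [h (0, 1) _]hH !hsum H1 H2 hb21 -/b.
rewrite !mul1r !mulr0 add0r addr0 !exprMn [b ^+ Q ^+ Q]hQQ.
have -> : b ^+ Q * t ^+ Q * b + b * t * (b ^+ Q) = b * b ^+ Q * (t ^+ Q + t) by ring.
by rewrite !mulf_neq0 // expf_neq0.
Qed.

End Herm.
End Pairs.

Lemma card_count (T : finType) (a : pred T) : #|[pred x | a x]| = count a (enum T).
Proof. by rewrite enumT cardE -size_filter /enum_mem. Qed.

Section Pt.
Variables (K : finFieldType) (L : fieldExtType K).

Definition lmul (p : L * L) (a : L) : L * L := lscale a p.

Fact lmul_lin p : linear (lmul p).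
Proof.
move=> k a b; rewrite /lmul /lscale /=.
congr (_, _); rewrite /= mulrDl -scalerAl //.
Qed.

HB.instance Definition _ p := GRing.isLinear.Build K L (L * L)%type *:%R (lmul p) (lmul_lin p).

Definition pt (p : L * L) : {vspace (L * L)%type} := (linfun (lmul p) @: fullv)%VS.

Lemma mem_pt p v : reflect (exists a, v = lscale a p) (v \in pt p).
Proof.
apply: (iffP memv_imgP) => [[a _ ->]|[a ->]]; exists a; rewrite ?memvf ?lfunE //.
Qed.

Lemma lscaleB a b (p : L * L) : lscale a p - lscale b p = lscale (a - b) p.
Proof. by case: p => x y; rewrite !lscaleE (_ : - (b * x, b * y) = (- (b * x), - (b * y))) // addpE; congr pair; ring. Qed.

Lemma dim_pt p : p != 0 -> \dim (pt p) = \dim {: L}%VS.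
Proof.
move=> p0; rewrite /pt limg_dim_eq //.
have /lker0P/eqP -> : injective (linfun (lmul p)).
  move=> a b; rewrite !lfunE /= /lmul => /eqP; rewrite -subr_eq0 lscaleB.
  move/eqP/lscale_eq0 => [/eqP|p0']; first by rewrite subr_eq0 => /eqP.
  by rewrite p0' eqxx in p0.
by rewrite capv0.
Qed.

End Pt.

Section Main.
Variables (K : finFieldType) (L : fieldExtType K) (Q : nat) (h : L * L -> L * L -> L) (T : L -> L).
Hypothesis hD : forall u v w, h (u + v) w = h u w + h v w.
Hypothesis hZ : forall a u v, h (lscale a u) v = a * h u v.
Hypothesis hH : forall u v, h v u = (h u v) ^+ Q.
Hypothesis hN : nondegen_form h.
Hypothesis Q1 : (1 < Q)%N.
Local Notation FL := (FinFieldExtType L).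
Hypothesis cardL : #|FL| = (Q ^ 2)%N.
Hypothesis hm1 : (-1 : L) ^+ Q = -1.
Hypothesis T0 : T 0 = 0.
Hypothesis Tnz : exists t, T t != 0.

Let hs := hsum K L h hD hZ.
Let hZr' := hZr K L Q h hZ hH.
Let hsym := hsym0 K L Q h hH Q1.

Lemma oppE (x y : L) : - (x, y) = (- x, - y). Proof. by []. Qed.

Lemma lscaleDr a x (p : L * L) y r :
  lscale a (lscale x p + lscale y r) = lscale (a * x) p + lscale (a * y) r.
Proof.
by case: p => p1 p2; case: r => r1 r2; rewrite !lscaleE !addpE ?lscaleE /=; congr pair; ring.
Qed.

Lemma lscaleDB x (p : L * L) y r x' y' :
  lscale x p + lscale y r - (lscale x' p + lscale y' r) = lscale (x - x') p + lscale (y - y') r.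
Proof.
by case: p => p1 p2; case: r => r1 r2; rewrite !lscaleE !addpE /=; congr pair; ring.
Qed.

Lemma lscaleN b (r : L * L) : lscale (- b) r = - lscale b r.
Proof. by case: r => r1 r2; rewrite !lscaleE oppE; congr pair; ring. Qed.

Theorem main_sec : exists G N : seq {vspace (L * L)%type},
  [/\ is_spread (\dim {:L}%VS) (G ++ N), size G = Q.+1, size N = (Q ^ 2 - Q)%N &
  [/\ forall D, D \in G -> totally_isotropic (fun u v => T (h u v)) D,
      forall D, D \in N -> ~ totally_isotropic (fun u v => T (h u v)) D &
      forall D, D \in N -> exists2 E, E \in N &
        is_polar_of (fun u v => T (h u v)) D E /\ (D :&: E)%VS = 0%VS]].
Proof.
have Htp : exists t : L, t ^+ Q + t != 0.
  have p0 : ('X^Q + 'X : {poly FL}) != 0.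
    by rewrite -size_poly_eq0 size_polyDl ?size_polyXn // size_polyX.
  have sz : (size ('X^Q + 'X : {poly FL})%R <= #|FL|)%N.
    rewrite size_polyDl ?size_polyXn ?size_polyX // cardL; case: (Q) Q1 => // k k0; rewrite expnS expn1; nia.
  have [t ht] := exists_nonroot FL _ p0 sz.
  by exists t; move: ht; rewrite rootE !hornerE.
have [u hu] := exists_aniso K L Q h hD hZ hH hN Q1 Htp.
have [w [wn0 hwu hww ind]] := perp2 K L Q h hD hZ hH hN Q1 u hu.
pose al := h u u; pose be := h w w.
have hal : al ^+ Q = al by rewrite /al -hH.
have hbe : be ^+ Q = be by rewrite /be -hH.
have huw : h u w = 0 := hsym _ _ hwu.
pose mk (c : L * L) := lscale c.1 u + lscale c.2 w.
have coords c c' : mk c = mk c' -> c = c'.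
  case: c c' => [x y] [x' y'] /eqP; rewrite -subr_eq0 /mk /= lscaleDB => /eqP /ind [/eqP + /eqP].
  by rewrite !subr_eq0 => /eqP -> /eqP ->.
have mkZ a c : lscale a (mk c) = mk (a * c.1, a * c.2) by rewrite /mk lscaleDr.
pose cs := ((0 : L), (1 : L)) :: [seq ((1 : L), (y : L)) | y <- enum FL].
have csP c : c \in cs -> c = (0, 1) \/ c.1 = 1.
  by rewrite inE => /orP [/eqP ->|/mapP [y _ ->]]; [left|right].
have cs1 (y : L) : ((1 : L), y) \in cs.
  rewrite inE; apply/orP; right; have yin : (y : FL) \in enum FL by rewrite mem_enum.
  exact: (map_f (fun y0 : FL => ((1 : L), (y0 : L))) yin).
have cs0 : ((0 : L), (1 : L)) \in cs by rewrite inE eqxx.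
have uniqP c c' a a' : c \in cs -> c' \in cs -> a != 0 ->
    a * c.1 = a' * c'.1 -> a * c.2 = a' * c'.2 -> c = c'.
  move=> hc hc' an0; case: (csP c hc) => [->|e1]; case: (csP c' hc') => [->|e1'] //=.
  - rewrite e1' mulr0 mulr1 => /esym -> ; rewrite mul0r mulr1 => a0.
    by rewrite a0 eqxx in an0.
  - by rewrite e1 mulr1 mulr0 => a0; rewrite a0 eqxx in an0.
  - rewrite e1 e1' !mulr1 => <- /(mulfI an0) e2.
    by clear hc hc'; case: c e1 e2 => x y /= ->; case: c' e1' => x' y' /= -> ->.
have mk00 : mk (0, 0) = 0 by rewrite /mk /= !lscale0 addr0.
have mkn0 c : c \in cs -> mk c != 0.
  move=> cc; apply/eqP => e; have := coords c (0, 0); rewrite mk00 => /(_ e) e'.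
  by case: (csP c cc) => [|]; rewrite e' // => -[] /eqP; rewrite eq_sym oner_eq0.
have cover v : exists2 c, c \in cs & exists a, v = lscale a (mk c).
  have [x [y ->]] := span2 K L u w ind v.
  have [x0|xn0] := eqVneq x 0.
    by exists (0, 1) => //; exists y; rewrite mkZ /mk /= x0 mulr0 mulr1.
  exists (1, y / x) => //; exists x; rewrite mkZ /mk /= mulr1.
  by rewrite [x * _]mulrC divfK.
have memmk c v : reflect (exists a, v = lscale a (mk c)) (v \in pt K L (mk c)).
  exact: mem_pt.
pose pts c := pt K L (mk c).
pose iso c := h (mk c) (mk c) == 0.
have E1 c : h u (mk c) = c.1 ^+ Q * al.
  by rewrite (hH (mk c) u) /mk hs hwu mulr0 addr0 exprMn hal.
have E2 c : h w (mk c) = c.2 ^+ Q * be.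
  by rewrite (hH (mk c) w) /mk hs huw mulr0 add0r exprMn hbe.
have hmk c : h (mk c) (mk c) = c.1 * c.1 ^+ Q * al + c.2 * c.2 ^+ Q * be.
  by rewrite {1}/mk hs E1 E2 !mulrA.
have ben0 : be != 0 := hww.
have aln0 : al != 0 := hu.
pose c0 := - al / be.
have c0n0 : c0 != 0 by rewrite mulf_neq0 ?oppr_eq0 ?invr_eq0.
have c0Q : c0 ^+ Q = c0.
  by rewrite /c0 exprMn exprVn -mulN1r exprMn hm1 hal hbe mulN1r.
have iso1 (y : L) : iso (1, y) = (y ^+ Q.+1 == c0).
  rewrite /iso hmk /= expr1n !mul1r -exprS /c0.
  apply/eqP/eqP => E.
    by apply: (mulIf ben0); rewrite divfK //; apply/eqP; rewrite -addr_eq0 addrC E.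
  by rewrite E divfK // addrN.
have iso0 : iso (0, 1) = false.
  by rewrite /iso hmk /= expr1n !mul1r mul0r mul0r add0r (negbTE ben0).
pose G := map pts (filter iso cs).
pose N := map pts (filter (predC iso) cs).
have hperm : perm_eq (G ++ N) (map pts cs).
  by rewrite /G /N -map_cat perm_map // perm_filterC.
have memGN D : (D \in G ++ N) = (D \in map pts cs) := perm_mem hperm D.
have sizecs : size cs = (Q ^ 2).+1.
  by rewrite /cs /= size_map -cardL cardT.
have countG : count iso cs = Q.+1.
  rewrite /= iso0 add0n count_map.
  rewrite -(norm_fiber FL Q c0 Q1 cardL c0n0 c0Q) card_count.
  by apply: eq_count => y; rewrite /= iso1.
exists G, N; split.
- split.
  + rewrite (perm_uniq hperm) map_inj_in_uniq.
      rewrite /cs cons_uniq; apply/andP; split.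
        apply/mapP => -[y _ /eqP]; rewrite xpair_eqE eq_sym oner_eq0 //.
      rewrite map_inj_uniq; [exact: (enum_uniq FL) | by move=> y y' []].
    move=> c c' cc cc' E.
    have : mk c \in pts c' by rewrite -E; apply/memmk; exists 1; rewrite lscale1.
    case/memmk => a; rewrite -{1}[mk c]lscale1 !mkZ => /coords [e1 e2].
    exact: (uniqP c c' 1 a cc cc' (oner_neq0 _) e1 e2).
  + move=> D; rewrite memGN => /mapP [c cc ->]; exact: dim_pt (mkn0 c cc).
  + move=> D E; rewrite !memGN => /mapP [c cc ->] /mapP [c' cc' ->] DE.
    apply/vspaceP => v; rewrite memv_cap memv0.
    apply/andP/eqP => [[/memmk [a ->] /memmk [a' e]]|->]; last by rewrite !mem0v.
    have [a0|an0] := eqVneq a 0; first by rewrite a0 lscale0.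
    move: e; rewrite !mkZ => /coords [e1 e2].
    by have ecc := uniqP c c' a a' cc cc' an0 e1 e2; rewrite ecc eqxx in DE.
  + move=> v; have [c cc [a ->]] := cover v.
    exists (pts c); first by rewrite memGN; apply: map_f.
    by apply/memmk; exists a.
- by rewrite size_map size_filter countG.
- rewrite size_map size_filter; have := count_predC iso cs; rewrite countG sizecs.
  move=> H; have Q2 : (Q <= Q ^ 2)%N by rewrite expnS expn1 leq_pmulr; lia.
  lia.
split.
- move=> D /mapP [c]; rewrite mem_filter => /andP [ic cc] -> x y /memmk [a ->] /memmk [b ->].
  by rewrite hZ hZr' (eqP ic) !mulr0 T0.
- move=> D /mapP [c]; rewrite mem_filter => /andP [ic cc] -> TI.
  have [t ht] := Tnz.
  have m1 : lscale (t / h (mk c) (mk c)) (mk c) \in pts c.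
    by apply/memmk; exists (t / h (mk c) (mk c)).
  have m2 : mk c \in pts c by apply/memmk; exists 1; rewrite lscale1.
  by have := TI _ _ m1 m2; rewrite hZ divfK // => H; rewrite H eqxx in ht.
move=> D /mapP [c]; rewrite mem_filter => /andP [ic cc] ->.
set p := mk c.
have hp : h p p != 0 by [].
have [r [rn0 hrp hrr indr]] := perp2 K L Q h hD hZ hH hN Q1 p hp.
have [c' cc' [a ra]] := cover r.
have an0 : a != 0 by apply: contraNneq rn0 => a0; rewrite ra a0 lscale0.
have ic' : ~~ iso c'.
  apply: contraNN hrr => /eqP ic'.
  by rewrite {1}ra hZ {1}ra hZr' ic' !mulr0.
have memr v : (v \in pts c') <-> exists b, v = lscale b r.
  split => [/memmk [b ->]|[b ->]]; last first.
    by apply/memmk; exists (b * a); rewrite ra lscaleA.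
  by exists (b / a); rewrite ra lscaleA divfK.
exists (pts c'); first by apply: map_f; rewrite mem_filter; apply/andP; split.
split.
  move=> v; rewrite memr; split.
    move=> [b ->] z /memmk [b' ->].
    by rewrite hZ hZr' (hsym _ _ hrp) !mulr0 T0.
  move=> H.
  have hpv : h p v = 0.
    apply/eqP; apply/negP => /negP hpv.
    have [t ht] := Tnz.
    have m1 : lscale (t / h p v) p \in pts c by apply/memmk; exists (t / h p v).
    by have := H _ m1; rewrite hZ divfK // => E; rewrite E eqxx in ht.
  have hvp := hsym _ _ hpv.
  have [x [y ev]] := span2 K L p r indr v.
  move: hvp; rewrite ev hs hrp mulr0 addr0 => /eqP; rewrite mulf_eq0 (negbTE hp) orbF => /eqP x0.
  by exists y; rewrite x0 lscale0 add0r.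
apply/vspaceP => v; rewrite memv_cap memv0.
apply/andP/eqP => [[/memmk [a1 e1] /memr [b e2]]|->]; last by rewrite !mem0v.
have : lscale a1 p + lscale (- b) r = 0 by rewrite lscaleN -e1 -e2 subrr.
by move/indr => [a10 _]; rewrite e1 a10 lscale0.
Qed.
End Main.

Lemma cardFL (K : finFieldType) (L : fieldExtType K) :
  #|FinFieldExtType L| = (#|K| ^ \dim {:L})%N.
Proof.
rewrite -(@card_vspacef K (finvect_type L) (Vector.class (finvect_type L))).
by rewrite card_vspace.
Qed.

Theorem mainTheorem13 (m q : nat) (K : finFieldType) (L : fieldExtType K)
  (h : L * L -> L * L -> L) :
  (1 <= m)%N -> prime_power q -> #|K| = (q ^ 2)%N ->
  \dim {: L}%VS = (2 * m - 1)%N ->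
  is_herm_form (hconj q m) h -> nondegen_form h ->
  exists G N : seq {vspace (L * L)%type},
    [/\ is_spread (2 * m - 1) (G ++ N),
        size G = (q ^ (2 * m - 1)).+1,
        size N = (q ^ (4 * m - 2) - q ^ (2 * m - 1))%N &
        [/\ forall D, D \in G -> totally_isotropic (hbar q m h) D,
        forall D, D \in N -> ~ totally_isotropic (hbar q m h) D &
        forall D, D \in N -> exists2 E, E \in N &
          is_polar_of (hbar q m h) D E /\ (D :&: E)%VS = 0%VS]].
Proof.
move=> m1 [p [k [pp k0 qE]]] cK hdim [hD hZ hH] hN.
have q2 : (1 < q)%N.
  rewrite qE; have := prime_gt1 pp => p1.
  by rewrite -(exp1n k) ltn_exp2r.
set Q := (q ^ (2 * m - 1))%N.
have Q1 : (1 < Q)%N.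
  apply: leq_trans (q2) _; rewrite /Q -{1}(expn1 q) leq_pexp2l //; [exact: ltnW q2 | lia].
have Q2 : (q ^ (4 * m - 2) = Q ^ 2)%N by rewrite /Q -expnM; congr expn; lia.
have cardL : #|FinFieldExtType L| = (Q ^ 2)%N.
  by rewrite cardFL cK hdim -expnM /Q -expnM mulnC.
have hm1 : (-1 : L) ^+ Q = -1.
  have [oq|eq] := boolP (odd q).
    by rewrite -signr_odd /Q oddX oq orbT.
  have e1K : (1 : K) = -1.
    have := expf_card (-1 : K); rewrite cK -signr_odd oddX (negbTE eq) orbF.
    by case: eqP.
  have e1 : (1 : L) = -1.
    by have := congr1 (in_alg L) e1K; rewrite rmorph1 rmorphN1.
  by rewrite -e1 expr1n.
have T0 : trq2 q m (0 : L) = 0.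
  by rewrite /trq2 big1 // => i _; rewrite expr0n expn_eq0; case: (q) q2.
have Tnz : exists t : L, trq2 q m t != 0.
  pose P := (\sum_(i < 2 * m - 1) 'X^(q ^ (2 * i)) : {poly FinFieldExtType L}).
  have hP (t : L) : P.[t] = trq2 q m t.
    by rewrite /P horner_sum; apply: eq_bigr => i _; rewrite hornerXn.
  have n0 : (0 < 2 * m - 1)%N by lia.
  have P0 : P != 0.
    apply/eqP => /(congr1 (fun p : {poly _} => p`_1)).
    rewrite coef0 /P coef_sum (bigD1 (Ordinal n0)) //= big1 ?addr0.
      by rewrite coefXn muln0 expn0 eqxx => /eqP; rewrite oner_eq0.
    move=> i /eqP ni; rewrite coefXn; case: eqP => // e; exfalso.
    have i0 : (0 < i)%N.
      by case: i ni e => [[|j] ij] //= ni _; exfalso; apply: ni; apply: val_inj.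
    have : (q <= q ^ (2 * i))%N.
      by rewrite -{1}(expn1 q) leq_pexp2l //; [exact: ltnW q2|lia].
    lia.
  have sP : (size P <= #|FinFieldExtType L|)%N.
    apply: leq_trans (size_sum _ _ _) _.
    apply/bigmax_leqP => i _; rewrite size_polyXn cardL -Q2.
    rewrite ltn_exp2l //; case: i => i /=; lia.
  have [t ht] := exists_nonroot _ P P0 sP.
  by exists t; rewrite -hP.
have := main_sec K L Q h (trq2 q m) hD hZ hH hN Q1 cardL hm1 T0 Tnz.
rewrite hdim Q2.
exact.
Qed.
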